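(* For every integer $N\ge 0$, let $T(N)$ be the number of tilings of a $3\times 3\times n$ box, $n=2N/3$, by $N$ bricks of size $1\times 2\times 3$ (and $0$ if $3\nmid N$). Then, as formal power series, \[ \sum_{N\ge 0} T(N)\,z^N=\frac{1-z^3}{1-7z^3-22z^6-36z^9}. \]
   Context: A tiling of a $k\times m\times n$ box (made of $kmn$ unit cubes) by $a\times b\times c$ bricks is a partition of the box into non-overlapping axis-parallel boxes with integer corner coordinates, each congruent (by an axis-permuting placement) to the $a\times b\times c$ brick; all orientations are allowed. Tilings related by symmetries of the box are counted as distinct. The empty tiling counts once for $N=0$. *)

(* Defs.v *)
From mathcomp Require Import all_boot all_order all_algebra.
Set Implicit Arguments. Unset Strict Implicit. Unset Printing Implicit Defensive.
Import GRing.Theory.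

(* A unit cell of the k x m x n box: integer coordinates (i,j,l),
   0 <= i < k, 0 <= j < m, 0 <= l < n (the cube [i,i+1]x[j,j+1]x[l,l+1]). *)
Definition cell (k m n : nat) : finType := ('I_k * 'I_m * 'I_n)%type.

(* A candidate brick placement: lower corner (x,y,z) and side lengths
   (dx,dy,dz); it occupies [x,x+dx) x [y,y+dy) x [z,z+dz). *)
Definition brick (k m n : nat) : finType :=
  (('I_k * 'I_m * 'I_n) * ('I_k.+1 * 'I_m.+1 * 'I_n.+1))%type.

Definition bx k m n (b : brick k m n) : nat := b.1.1.1.
Definition by_ k m n (b : brick k m n) : nat := b.1.1.2.
Definition bz k m n (b : brick k m n) : nat := b.1.2.
Definition bdx k m n (b : brick k m n) : nat := b.2.1.1.
Definition bdy k m n (b : brick k m n) : nat := b.2.1.2.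
Definition bdz k m n (b : brick k m n) : nat := b.2.2.

Definition valid_brick (a b c : nat) k m n (br : brick k m n) : bool :=
  perm_eq [:: bdx br; bdy br; bdz br] [:: a; b; c]
  && (bx br + bdx br <= k) && (by_ br + bdy br <= m) && (bz br + bdz br <= n).

Definition covers k m n (br : brick k m n) (p : cell k m n) : bool :=
  (bx br <= p.1.1 < bx br + bdx br)
  && (by_ br <= p.1.2 < by_ br + bdy br)
  && (bz br <= p.2 < bz br + bdz br).

Definition is_tiling (a b c : nat) k m n (S : {set brick k m n}) : bool :=
  [forall br in S, valid_brick a b c br]
  && [forall p : cell k m n, #|[set br in S | covers br p]| == 1].

Definition num_tilings (a b c k m n N : nat) : nat :=
  #|[set S : {set brick k m n} | is_tiling a b c S && (#|S| == N)]|.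

Definition T (N : nat) : nat :=
  if 3 %| N then num_tilings 1 2 3 3 3 (2 * N %/ 3) N else 0.

Local Open Scope ring_scope.

Definition T_num : {poly int} := 1 - 'X^3.
Definition T_den : {poly int} := 1 - 7%:R *: 'X^3 - 22%:R *: 'X^6 - 36%:R *: 'X^9.

(* Main.v *)
Require Import Defs.
From mathcomp Require Import all_boot all_order all_algebra zify ring.
Set Implicit Arguments. Unset Strict Implicit. Unset Printing Implicit Defensive.

Section Gen.
Variables (B C : finType) (valid : pred B) (cov : B -> C -> bool).
Implicit Types (R : {set C}) (S : {set B}) (b : B) (q p : C).

Definition cellsb b : {set C} := [set q | cov b q].
Definition tiles R S : bool :=
  [forall b in S, valid b] && [forall p, #|[set b in S | cov b p]| == (p \in R)].
Definition cnt R := #|[set S | tiles R S]|.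

Lemma tilesP R S : reflect ((forall b, b \in S -> valid b) /\
   (forall p, #|[set b in S | cov b p]| = (p \in R))) (tiles R S).
Proof.
apply: (iffP andP) => [[/forall_inP H1 /forallP H2]|[H1 H2]]; split.
- exact: H1.
- by move=> p; apply/eqP.
- by apply/forall_inP.
- by apply/forallP => p; rewrite H2.
Qed.

Lemma tiles_sub R S b q : tiles R S -> b \in S -> cov b q -> q \in R.
Proof.
move=> /tilesP[_ H] bS cbq; have := H q.
have : b \in [set b in S | cov b q] by rewrite inE bS cbq.
move=> Hb; case: (q \in R) => //= H0.
by have := card0_eq H0 b; rewrite Hb.
Qed.

Lemma tilesD R S b : tiles R S -> b \in S -> tiles (R :\: cellsb b) (S :\ b).
Proof.
move=> tRS bS; have [Hv Hc] := tilesP _ _ tRS.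
apply/tilesP; split.
  by move=> b'; rewrite inE => /andP[_]; apply: Hv.
move=> q.
have -> : [set b' in S :\ b | cov b' q] = [set b' in S | cov b' q] :\ b.
  by apply/setP => b'; rewrite !inE andbA.
have := cardsD1 b [set b' in S | cov b' q]; rewrite Hc !inE bS /=.
case cbq: (cov b q) => /=.
  by rewrite (tiles_sub tRS bS cbq) /=; case: #|_|.
by rewrite add0n => ->.
Qed.

Lemma tilesU R S b p : tiles (R :\: cellsb b) S -> valid b -> cov b p ->
  cellsb b \subset R -> b \notin S /\ tiles R (b |: S).
Proof.
move=> tRS vb cbp sub.
have bS : b \notin S.
  apply/negP => bS; have := tiles_sub tRS bS cbp.
  by rewrite !inE cbp.
split => //; have [Hv Hc] := tilesP _ _ tRS.
apply/tilesP; split.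
  by move=> b'; rewrite !inE => /orP[/eqP->|]; [|apply: Hv].
move=> q.
case cbq: (cov b q).
  have -> : [set b' in b |: S | cov b' q] = b |: [set b' in S | cov b' q].
    by apply/setP => b'; rewrite !inE; case: eqP => [->|] //=; rewrite ?cbq.
  rewrite cardsU1 Hc !inE (negbTE bS) cbq /=.
  have qR : q \in R by apply: (subsetP sub); rewrite inE.
  by rewrite qR.
have -> : [set b' in b |: S | cov b' q] = [set b' in S | cov b' q].
  by apply/setP => b'; rewrite !inE; case: eqP => [->|] //=; rewrite ?cbq ?(negbTE bS).
by rewrite Hc !inE cbq.
Qed.

Lemma cnt_rec R p : p \in R ->
  cnt R = \sum_(b | valid b && cov b p && (cellsb b \subset R)) cnt (R :\: cellsb b).
Proof.
move=> pR.
rewrite /cnt -sum1_card.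
transitivity (\sum_(S in [set S | tiles R S])
   \sum_(b | valid b && cov b p && (cellsb b \subset R)) (b \in S : nat)).
  apply: eq_bigr => S; rewrite inE => tRS.
  rewrite -big_mkcondr /=. 
  rewrite (eq_bigl (fun b => b \in [set b in S | cov b p])); last first.
    move=> b; rewrite !inE.
    apply/idP/idP => [/andP[/andP[/andP[_ c1] _] b1]|/andP[bS cbp]].
      by rewrite b1 c1.
    have [Hv _] := tilesP _ _ tRS.
    rewrite Hv //= cbp bS /= andbT; apply/subsetP => q; rewrite inE.
    exact: (tiles_sub tRS bS).
  rewrite sum1_card; have [_ Hc] := tilesP _ _ tRS.
  by rewrite Hc pR.
rewrite exchange_big /=; apply: eq_bigr => b /andP[/andP[vb cbp] sub].
rewrite -big_mkcondr /= sum1_card.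
rewrite -[RHS](card_in_imset (f := fun S => b |: S)); last first.
  move=> S1 S2; rewrite !inE => t1 t2 E.
  have [n1 _] := tilesU t1 vb cbp sub; have [n2 _] := tilesU t2 vb cbp sub.
  by rewrite -(setU1K n1) E setU1K.
apply: eq_card => S; rewrite -[S \in _]topredE /= inE; apply/andP/imsetP => [[tRS bS]|[S' tS' ->]].
  exists (S :\ b); first by rewrite inE; apply: tilesD.
  by rewrite setD1K.
move: tS'; rewrite inE => tS'; have [_ t] := tilesU tS' vb cbp sub.
by split => //; rewrite setU11.
Qed.

Lemma cnt0 : (forall b, valid b -> exists q, cov b q) -> cnt set0 = 1.
Proof.
move=> Hex; rewrite /cnt -(cards1 (set0 : {set B})); apply: eq_card => S.
rewrite !inE; apply/idP/idP => [tS|/eqP->].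
  apply/eqP/setP => b; rewrite inE; apply/negP => bS.
  have [Hv _] := tilesP _ _ tS; have [q cq] := Hex b (Hv b bS).
  by have := tiles_sub tS bS cq; rewrite inE.
by apply/tilesP; split => [b|p]; rewrite ?inE // (_ : [set b in set0 | cov b p] = set0) ?cards0 //; apply/setP => b; rewrite !inE.
Qed.

Lemma tiles_vol (k : nat) : (forall b, valid b -> #|cellsb b| = k) ->
  forall R S, tiles R S -> #|S| * k = #|R|.
Proof.
move=> Hk R S; move Hm: #|S| => m; elim: m R S Hm => [|m IH] R S Hm tRS.
  move/eqP: Hm; rewrite cards_eq0 => /eqP SE; subst S.
  suff -> : R = set0 by rewrite cards0.
  apply/setP => p; rewrite inE; apply/negP => pR.
  have [_ Hc] := tilesP _ _ tRS; have := Hc p; rewrite pR.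
  by rewrite (_ : [set b in set0 | cov b p] = set0) ?cards0 //; apply/setP => b; rewrite !inE.
have : 0 < #|S| by rewrite Hm.
case/card_gt0P => b bS.
have t' := tilesD tRS bS.
have := IH _ _ _ t'; rewrite (cardsD1 b S) bS in Hm.
move=> /(_ (eq_add_S _ _ Hm)) H.
have sub : cellsb b \subset R by apply/subsetP => q; rewrite inE; apply: tiles_sub tRS bS.
have [Hv _] := tilesP _ _ tRS.
have := cardsD R (cellsb b); rewrite (setIidPr sub) Hk ?Hv // -H.
have := subset_leq_card sub; rewrite Hk ?Hv //.
rewrite mulSn; lia.
Qed.
End Gen.

Definition six : seq (nat * nat * nat) :=
  [:: (1,2,3); (1,3,2); (2,1,3); (2,3,1); (3,1,2); (3,2,1)].
Definition E : seq bool := nseq 27 false.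
Definition inbox (i : nat) (d : nat * nat * nat) (j : nat) : bool :=
  [&& i %% 3 <= j %% 3 < i %% 3 + d.1.1, i %/ 3 <= (j %/ 3) %% 3 < i %/ 3 + d.1.2
   & j %/ 9 < d.2].
Definition place (O : seq bool) i d :=
  [seq nth false O j || inbox i d j | j <- iota 0 27].
Definition okd (O : seq bool) i d :=
  [&& i %% 3 + d.1.1 <= 3, i %/ 3 + d.1.2 <= 3 &
    all (fun j => ~~ (nth false O j && inbox i d j)) (iota 0 27)].
Definition ff (O : seq bool) := find (fun j => ~~ nth false O j) (iota 0 9).
Fixpoint fill (k : nat) (O : seq bool) : seq (seq bool) :=
  if k is k'.+1 then
    (if ff O < 9 then flatten [seq fill k' (place O (ff O) d) | d <- six & okd O (ff O) d]
     else [:: O])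
  else [:: O].
Definition shift (O : seq bool) := drop 9 O ++ nseq 9 false.
Fixpoint G (h : nat) (O : seq bool) : nat :=
  if h is h'.+1 then sumn (map (fun O' => G h' (shift O')) (fill 9 O)) else (O == E).
Definition mk (l : seq nat) : seq bool := [seq j \in l | j <- iota 0 27].
Definition st : seq (seq bool) := map mk [::
  [:: ];
  [:: 0; 1; 2; 3; 4; 5; 6; 7; 8; 9; 10; 11; 12; 13; 14];
  [:: 0; 1; 2; 3; 4; 5; 6; 7; 8; 9; 10; 12; 13; 15; 16];
  [:: 0; 1; 2; 3; 4; 5; 6; 7; 8; 10; 11; 13; 14; 16; 17];
  [:: 0; 1; 2; 3; 4; 5; 6; 7; 8];
  [:: 0; 3; 6];
  [:: 2; 5; 8];
  [:: 0; 1; 2; 3; 4; 5; 6; 7; 8; 12; 13; 14; 15; 16; 17];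
  [:: 0; 1; 2];
  [:: 6; 7; 8];
  [:: 0; 1; 2; 3; 4; 5];
  [:: 0; 1; 3; 4; 6; 7];
  [:: 1; 2; 4; 5; 7; 8];
  [:: 1; 2; 4; 5; 7; 8; 10; 11; 13; 14; 16; 17];
  [:: 0; 1; 3; 4; 6; 7; 9; 10; 12; 13; 15; 16];
  [:: 3; 4; 5; 6; 7; 8];
  [:: 3; 4; 5; 6; 7; 8; 12; 13; 14; 15; 16; 17];
  [:: 0; 1; 2; 3; 4; 5; 9; 10; 11; 12; 13; 14]
].
Fixpoint vec (h : nat) : seq nat :=
  if h is h'.+1 then
    let v := vec h' in map (fun O : seq bool => sumn (map (fun O' : seq bool => nth 0 v (index (shift O') st)) (fill 9 O))) st
  else map (fun O : seq bool => nat_of_bool (O == E)) st.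
Lemma st_closed : all (fun O => all (fun O' => shift O' \in st) (fill 9 O)) st.
Proof. vm_compute. reflexivity. Qed.
Lemma vec_rec : let v6 := vec 6 in let v4 := vec 4 in let v2 := vec 2 in let v0 := vec 0 in all (fun j => nth 0 v6 j == 7 * nth 0 v4 j + 22 * nth 0 v2 j + 36 * nth 0 v0 j) (iota 0 18).
Proof. vm_compute. reflexivity. Qed.

Lemma six_small : all (fun a => all (fun b => all (fun c =>
   perm_eq [:: a; b; c] [:: 1; 2; 3] == ((a, b, c) \in six)) (iota 0 4)) (iota 0 4)) (iota 0 4).
Proof. by vm_compute. Qed.

Lemma six_perm a b c : perm_eq [:: a; b; c] [:: 1; 2; 3] = ((a, b, c) \in six).
Proof.
case: (boolP [&& a < 4, b < 4 & c < 4]) => [/and3P[ha hb hc]|H].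
  apply/eqP; move/allP: six_small => /(_ a); rewrite mem_iota ha => /(_ isT).
  move/allP => /(_ b); rewrite mem_iota hb => /(_ isT).
  by move/allP => /(_ c); rewrite mem_iota hc => /(_ isT).
transitivity false; last first.
  apply/esym/negP => Hm; move: H.
  have Hb : all (fun t : nat * nat * nat => [&& t.1.1 < 4, t.1.2 < 4 & t.2 < 4]) six by [].
  by have /= -> := allP Hb _ Hm.
apply/negP => /perm_mem Hp; move: H.
have ha := Hp a; have hb := Hp b; have hc := Hp c.
rewrite !inE !eqxx /= ?orbT in ha hb hc.
move: (esym ha) (esym hb) (esym hc) => {ha hb hc}.
by case/or3P => /eqP ->; case/or3P => /eqP ->; case/or3P => /eqP ->.
Qed.

Lemma card_interval k a d : a + d <= k -> #|[set x : 'I_k | a <= x < a + d]| = d.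
Proof.
move=> H.
have -> : #|[set x : 'I_k | a <= x < a + d]| = count (fun x => a <= x < a + d) (iota 0 k).
  rewrite cardE /enum_mem size_filter -val_enum_ord count_map.
  by rewrite enumT; apply: eq_count => x; rewrite /= inE.
rewrite -(subnKC H) -addnA iotaD iotaD !count_cat add0n.
rewrite (@eq_in_count _ _ pred0); last by move=> x; rewrite mem_iota /=; lia.
rewrite (@eq_in_count _ (fun x => a <= x < a + d) predT (iota a d)); last by move=> x; rewrite mem_iota /=; lia.
rewrite (@eq_in_count _ _ pred0 (iota (a + d) _)); last by move=> x; rewrite mem_iota /=; lia.
by rewrite !count_pred0 count_predT size_iota add0n addn0.
Qed.

Lemma six_prop (t : nat * nat * nat) : t \in six ->
  [/\ 0 < t.1.1 <= 3, 0 < t.1.2 <= 3, 0 < t.2 <= 3 & t.1.1 * t.1.2 * t.2 = 6].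
Proof.
have H : all (fun t : nat * nat * nat => [&& 0 < t.1.1 <= 3, 0 < t.1.2 <= 3, 0 < t.2 <= 3 & t.1.1 * t.1.2 * t.2 == 6]) six by [].
by move=> /(allP H) /and4P[-> -> -> /eqP ->].
Qed.


Definition fits h (O : seq bool) := all (fun j => ~~ nth false O j || (j %/ 9 < h)) (iota 0 27).
Definition nfree (O : seq bool) := count (fun j => ~~ nth false O j) (iota 0 9).

Lemma fitsP h O : size O = 27 ->
  reflect (forall j, nth false O j -> j %/ 9 < h) (fits h O).
Proof.
move=> sO; apply: (iffP allP) => H j.
  case: (ltnP j 27) => hj; last by rewrite nth_default ?sO.
  by move=> Hj; have := H j; rewrite mem_iota hj Hj /= => ->.
by move=> _; case Hj: (nth false O j) => //=; apply: H.
Qed.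

Lemma size_place O i d : size (place O i d) = 27.
Proof. by rewrite size_map size_iota. Qed.

Lemma nth_place O i d j : size O = 27 -> d.2 <= 3 ->
  nth false (place O i d) j = nth false O j || inbox i d j.
Proof.
move=> sO hd; case: (ltnP j 27) => hj.
  by rewrite (nth_map 0) ?size_iota // nth_iota.
rewrite !nth_default ?sO ?size_place //= /inbox.
by apply/esym/negP => /and3P[_ _]; lia.
Qed.

Lemma inbox_self i d : i < 9 -> d \in six -> inbox i d i.
Proof. by move=> hi /six_prop[]; rewrite /inbox; lia. Qed.

Lemma fits_place h O i d : size O = 27 -> fits h O -> i < 9 -> d \in six ->
  fits h (place O i d) = (d.2 <= h).
Proof.
move=> sO /(fitsP _ sO) fO hi; case: d => [[dx dy] dz] hd.
have [/= hd0 hd1 hd2 _] := six_prop hd.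
apply/(fitsP _ (size_place _ _ _))/idP => [H|H j].
  apply: contraT; rewrite -ltnNge => hlt.
  have := H (i + 9 * h); rewrite nth_place //; last by case/andP: hd2.
  rewrite /inbox.
  have -> : [&& i %% 3 <= (i + 9 * h) %% 3 < i %% 3 + dx,
      i %/ 3 <= (i + 9 * h) %/ 3 %% 3 < i %/ 3 + dy & (i + 9 * h) %/ 9 < dz].
    by lia.
  by rewrite orbT => /(_ isT); lia.
rewrite nth_place //; last by case/andP: hd2.
by case/orP => [/fO //|/and3P[_ _ h3]]; move: h3 => /= h3; lia.
Qed.

Lemma ff_spec O : ff O < 9 -> ~~ nth false O (ff O) /\ forall j, j < ff O -> nth false O j.
Proof.
move=> H; split.
  by have := nth_find 0 (_ : has (fun j => ~~ nth false O j) (iota 0 9));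
    rewrite nth_iota // has_find size_iota; apply.
move=> j hj; have hj9 : j < 9 by apply: ltn_trans H.
by have := before_find 0 hj; rewrite nth_iota // add0n => /negbFE.
Qed.

Lemma ff_none O : ~~ (ff O < 9) -> forall j, j < 9 -> nth false O j.
Proof.
rewrite /ff -(size_iota 0 9) -has_find => /hasPn H j hj.
by have := H j; rewrite mem_iota hj negbK; apply.
Qed.

Lemma count_le_in (T : eqType) (a1 a2 : pred T) s :
  (forall y, y \in s -> a1 y -> a2 y) -> count a1 s <= count a2 s.
Proof.
elim: s => //= y s IH H; apply: leq_add.
  by case h1: (a1 y) => //; rewrite (H y) ?inE ?eqxx.
by apply: IH => z zs; apply: H; rewrite inE zs orbT.
Qed.

Lemma count_strict (T : eqType) (a1 a2 : pred T) s x :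
  (forall y, y \in s -> a1 y -> a2 y) -> x \in s -> a2 x -> ~~ a1 x ->
  count a1 s < count a2 s.
Proof.
elim: s => // y s IH H; rewrite inE => /orP[/eqP ->|xs] h2 h1 /=.
  rewrite h2 (negbTE h1) /= add0n add1n ltnS.
  by apply: count_le_in => z zs; apply: H; rewrite inE zs orbT.
rewrite -addnS; apply: leq_add.
  by case h: (a1 y) => //; rewrite (H y) ?inE ?eqxx.
by apply: IH => // z zs; apply: H; rewrite inE zs orbT.
Qed.

Lemma nfree_place O d : size O = 27 -> ff O < 9 -> d \in six ->
  nfree (place O (ff O) d) < nfree O.
Proof.
move=> sO hi hd; have [_ _ /andP[_ hd2] _] := six_prop hd.
have [h1 _] := ff_spec hi.
apply: (count_strict (x := ff O)).
- by move=> y _; rewrite nth_place //; case: (nth false O y).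
- by rewrite mem_iota.
- exact: h1.
- by rewrite nth_place // inbox_self // orbT.
Qed.

Lemma fill_S k O : fill k.+1 O =
  if ff O < 9 then flatten [seq fill k (place O (ff O) d) | d <- six & okd O (ff O) d]
  else [:: O].
Proof. by []. Qed.

Lemma fill_inv k O O' : size O = 27 -> O' \in fill k O ->
  size O' = 27 /\ forall j, nth false O j -> nth false O' j.
Proof.
elim: k O => [|k IH] O sO; first by rewrite /= inE => /eqP ->.
rewrite fill_S; case: ifP => hi; last by rewrite inE => /eqP ->.
case/flattenP => l /mapP[d]. rewrite mem_filter => /andP[_ hd] -> hO'.
have [_ _ /andP[_ hd2] _] := six_prop hd.
have [s1 H1] := IH _ (size_place _ _ _) hO'; split => // j hj.
by apply: H1; rewrite nth_place // hj.
Qed.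

Lemma fill_full k O O' : size O = 27 -> nfree O <= k -> O' \in fill k O ->
  forall j, j < 9 -> nth false O' j.
Proof.
elim: k O => [|k IH] O sO hk.
  rewrite /= inE => /eqP -> j hj.
  have /hasPn /(_ j) : ~~ has (fun j => ~~ nth false O j) (iota 0 9).
    by rewrite has_count; move: hk; rewrite /nfree; lia.
  by rewrite mem_iota hj negbK; apply.
rewrite fill_S; case: ifP => hi; last by rewrite inE => /eqP ->; apply: ff_none; rewrite hi.
case/flattenP => l /mapP[d]; rewrite mem_filter => /andP[_ hd] -> hO'.
apply: (IH _ (size_place _ _ _)) hO'.
by have := nfree_place sO hi hd; lia.
Qed.

Lemma nth_shift O j : size O = 27 -> nth false (shift O) j = nth false O (j + 9).
Proof.
move=> sO; rewrite /shift nth_cat size_drop sO.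
case: ltnP => hj; first by rewrite nth_drop addnC.
by rewrite nth_nseq if_same nth_default // sO; lia.
Qed.

Lemma size_shift O : size O = 27 -> size (shift O) = 27.
Proof. by move=> sO; rewrite size_cat size_drop size_nseq sO. Qed.

Lemma fits_shift h O : size O = 27 -> fits h (shift O) = fits h.+1 O.
Proof.
move=> sO; apply/(fitsP _ (size_shift sO))/(fitsP _ sO) => H j.
  case: (ltnP j 9) => hj; first by move=> _; lia.
  by move=> hO; have := H (j - 9); rewrite nth_shift // subnK // => /(_ hO); lia.
by rewrite nth_shift // => /H; lia.
Qed.

Lemma fits_sub h O O' : size O = 27 -> size O' = 27 ->
  (forall j, nth false O j -> nth false O' j) -> fits h O' -> fits h O.
Proof.
move=> sO sO' Hs /(fitsP _ sO') H; apply/(fitsP _ sO) => j /Hs; exact: H.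
Qed.

Lemma fits0E O : size O = 27 -> fits 0 O -> O = E.
Proof.
move=> sO /(fitsP _ sO) H; apply: (@eq_from_nth _ false); first by rewrite sO.
move=> j _; rewrite nth_nseq if_same; apply/negP => /H.
by rewrite ltn0.
Qed.

Lemma G_S h O : G h.+1 O = sumn (map (fun O' => G h (shift O')) (fill 9 O)).
Proof. by []. Qed.

Lemma G_nofit h O : size O = 27 -> ~~ fits h O -> G h O = 0.
Proof.
elim: h O => [|h IH] O sO hf.
  rewrite /G; case: eqP => // EO; move: hf; rewrite EO; by [].
rewrite G_S sumnE big_map big1_seq // => O' /andP[_ hO'].
have [s' Hs] := fill_inv sO hO'.
apply: IH; first exact: size_shift.
rewrite fits_shift //; apply: contra hf; exact: fits_sub.
Qed.

Lemma enc_dec x y z : x < 3 -> y < 3 ->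
  (x + 3 * y + 9 * z) %% 3 = x /\ ((x + 3 * y + 9 * z) %/ 3) %% 3 = y /\ (x + 3 * y + 9 * z) %/ 9 = z.
Proof. move=> *; lia. Qed.

Definition keep (P : Prop) := P.

Lemma dm3 i : i %% 3 + 3 * (i %/ 3) = i.
Proof. lia. Qed.

Lemma inbox_cov i d x y z : x < 3 -> y < 3 -> inbox i d (x + 3 * y + 9 * z) =
  [&& i %% 3 <= x < i %% 3 + d.1.1, i %/ 3 <= y < i %/ 3 + d.1.2 & z < d.2].
Proof. by move=> hx hy; have [e1 [e2 e3]] := enc_dec z hx hy; rewrite /inbox e1 e2 e3. Qed.

Lemma dec27 j : j < 27 -> exists x y z, j = x + 3 * y + 9 * z /\ x < 3 /\ y < 3 /\ z < 3.
Proof.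
move=> hj; exists (j %% 3), (j %/ 3 %% 3), (j %/ 9); split; first lia.
by split; [|split]; lia.
Qed.

Section Box.
Variable n : nat.
Definition vb (b : brick 3 3 n) := valid_brick 1 2 3 b.
Definition cv (b : brick 3 3 n) (q : cell 3 3 n) := covers b q.

Lemma vbE (x y : 'I_3) (z : 'I_n) (dx dy : 'I_4) (dz : 'I_n.+1) :
  vb ((x, y, z), (dx, dy, dz)) =
  [&& ((dx : nat), (dy : nat), (dz : nat)) \in six, x + dx <= 3, y + dy <= 3 & z + dz <= n].
Proof. by rewrite /vb /valid_brick /bdx /bdy /bdz /bx /by_ /bz /= six_perm !andbA. Qed.

Lemma cvE (x y : 'I_3) (z : 'I_n) (dx dy : 'I_4) (dz : 'I_n.+1) (q : cell 3 3 n) :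
  cv ((x, y, z), (dx, dy, dz)) q =
  ((x <= q.1.1 < x + dx) && (y <= q.1.2 < y + dy)) && (z <= q.2 < z + dz).
Proof. by []. Qed.

Lemma cv_corner b : vb b -> cv b b.1.
Proof.
case: b => [[[x y] z] [[dx dy] dz]]; rewrite vbE cvE /= => /and4P[/six_prop[]] /=.
move=> /andP[h1 _] /andP[h2 _] /andP[h3 _] _ _ _ _.
rewrite !leqnn /=; lia.
Qed.

Lemma cells6 b : vb b -> #|cellsb cv b| = 6.
Proof.
case: b => [[[x y] z] [[dx dy] dz]]; rewrite vbE => /and4P[/six_prop[_ _ _ /= H6] h1 h2 h3].
have -> : cellsb cv ((x, y, z), (dx, dy, dz)) =
   setX (setX [set u : 'I_3 | x <= u < x + dx] [set u : 'I_3 | y <= u < y + dy])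
        [set u : 'I_n | z <= u < z + dz].
  by apply/setP => [[[a b] c]]; rewrite !inE cvE /= andbA.
by rewrite !cardsX !card_interval.
Qed.

Definition Rc h O : {set cell 3 3 n} :=
  [set q : cell 3 3 n | (n - h <= q.2) && ~~ nth false O (q.1.1 + 3 * q.1.2 + 9 * (q.2 - (n - h)))].

Definition mkb (p : cell 3 3 n) (d : nat * nat * nat) : brick 3 3 n :=
  (p, (inord d.1.1, inord d.1.2, inord d.2)).

Lemma step h O (p : cell 3 3 n) : 0 < h <= n -> size O = 27 -> fits h O -> ff O < 9 ->
  p.1.1 = ff O %% 3 :> nat -> p.1.2 = ff O %/ 3 :> nat -> p.2 = n - h :> nat ->
  cnt vb cv (Rc h O) =
  \sum_(d <- six | okd O (ff O) d && (d.2 <= h)) cnt vb cv (Rc h (place O (ff O) d)).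
Proof.
move=> /andP[h0 hn] sO fO hi; have [hfree hmin] := ff_spec hi.
move: hi hfree hmin; set i := ff O => hi hfree hmin.
case: p => [[px py] pz] /= hpx hpy hpz.
have hi3 : i = px + 3 * py by rewrite hpx hpy dm3.
have inbE : forall d x y z, x < 3 -> y < 3 -> inbox i d (x + 3 * y + 9 * z) =
   [&& px <= x < px + d.1.1, py <= y < py + d.1.2 & z < d.2].
  by move=> d x y z hx hy; rewrite inbox_cov // -hpx -hpy.
have hp3 : keep ((i %% 3 = px) /\ (i %/ 3 = py)) by [].
clear hpx hpy.
have pR : ((px, py, pz) : cell 3 3 n) \in Rc h O.
  by rewrite inE /= hpz leqnn /= subnn muln0 addn0 -hi3.
rewrite (cnt_rec vb cv pR).
set s := [seq mkb (px, py, pz) d | d <- six & okd O i d && (d.2 <= h)].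
have Hu : uniq s.
  rewrite map_inj_in_uniq; first by rewrite filter_uniq.
  move=> [[a1 b1] c1] [[a2 b2] c2]; rewrite !mem_filter /= => /andP[/andP[_ h1] H1] /andP[/andP[_ h2] H2].
  have [/= ? ? ? _] := six_prop H1; have [/= ? ? ? _] := six_prop H2.
  rewrite /mkb /= => -[E1 E2 E3].
  move: (congr1 (@nat_of_ord _) E1) (congr1 (@nat_of_ord _) E2) (congr1 (@nat_of_ord _) E3).
  by (rewrite !inordK; try lia); move=> -> -> ->.
have Hmem : forall b, (vb b && cv b (px, py, pz) && (cellsb cv b \subset Rc h O)) = (b \in s).
  move=> [[[cx cy] cz] [[ex ey] ez]]; apply/idP/idP.
    move=> /andP[/andP[hv hc] hsub]; move: hv hc; rewrite vbE cvE /= => /and4P[hd hbx hby hbz] hc.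
    have [/= hx hy hz _] := six_prop hd.
    have : (cx, cy, cz) \in cellsb cv ((cx, cy, cz), (ex, ey, ez)) by rewrite inE cvE /=; lia.
    move=> /(subsetP hsub); rewrite inE /= => /andP[hzc hnc].
    have ecz : cz = n - h :> nat by lia.
    rewrite ecz subnn muln0 addn0 in hnc.
    have hge : i <= cx + 3 * cy.
      by case: (ltnP (cx + 3 * cy) i) => // /hmin; rewrite (negbTE hnc).
    have ecx : cx = px :> nat by move: (ltn_ord cx) (ltn_ord px) (ltn_ord cy) (ltn_ord py); lia.
    have ecy : cy = py :> nat by move: (ltn_ord cx) (ltn_ord px) (ltn_ord cy) (ltn_ord py); lia.
    apply/mapP; exists ((ex : nat), (ey : nat), (ez : nat)).
      rewrite mem_filter /= hd andbT; apply/andP; split; last by lia.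
      rewrite /okd; apply/and3P; split; [case: hp3 => -> _ /=; lia | case: hp3 => _ -> /=; lia | ].
      apply/allP => j; rewrite mem_iota => /andP[_ hj].
      have [x [y [z [Ej [hx3 [hy3 hz3]]]]]] := dec27 hj; rewrite Ej.
      apply/negP => /andP[hO]; rewrite inbE //= => hin.
      have hq3 : pz + z < n by lia.
      pose q : cell 3 3 n := ((Ordinal hx3, Ordinal hy3), Ordinal hq3).
      have qcov : q \in cellsb cv ((cx, cy, cz), (ex, ey, ez)) by rewrite inE cvE /=; lia.
      move: (subsetP hsub q qcov); rewrite inE /= => /andP[_].
      by rewrite hpz addKn hO.
    rewrite /mkb /= !inord_val; congr (_, _).
    by congr (_, _, _); apply: val_inj => /=; lia.
  move/mapP => [[[dx dy] dz]]; rewrite mem_filter /= => /andP[/andP[hok hdh] hd] ->.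
  have [/= hx hy hz _] := six_prop hd.
  move: hok; rewrite /okd => /and3P[o1 o2 /allP o3]; move: o1 o2; case: hp3 => -> -> /= o1 o2.
  rewrite /mkb vbE cvE /= (@inordK 3 dx) ?(@inordK 3 dy) ?(@inordK n dz); try lia.
  rewrite hd /=; apply/andP; split; first lia.
  apply/subsetP => -[[qx qy] qz]; rewrite inE cvE /= (@inordK 3 dx) ?(@inordK 3 dy) ?(@inordK n dz); try lia.
  move=> hc; rewrite inE /=; apply/andP; split; first lia.
  have := o3 (qx + 3 * qy + 9 * (qz - (n - h))); rewrite mem_iota.
  have hqz := ltn_ord qz; have hqx := ltn_ord qx; have hqy := ltn_ord qy.
  move=> /(_ ltac:(lia)) /negP H; apply/negP => hO; apply: H; rewrite hO inbE //=; lia.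
rewrite (eq_bigl (fun b => b \in s)); last by move=> b; rewrite Hmem.
rewrite -big_uniq // big_map big_filter.
clear Hmem Hu pR s.
rewrite big_seq_cond [RHS]big_seq_cond.
apply: eq_bigr => -[[dx dy] dz] /andP[hd /andP[hok hdh]]; move: hdh => /= hdh.
have [/= hx hy hz _] := six_prop hd.
congr (cnt _ _ _); apply/setP => -[[qx qy] qz]; rewrite !inE /mkb cvE /= nth_place //; last by case/andP: hz.
rewrite (@inordK 3 dx) ?(@inordK 3 dy) ?(@inordK n dz); try lia.
case: (leqP (n - h) qz) => hq /=; last by rewrite andbF.
rewrite inbE // /= negb_or andbC; congr (_ && _); congr negb.
have hqz := ltn_ord qz; apply/idP/idP; lia.
Qed.

Lemma Rc_shift h O : size O = 27 -> (forall j, j < 9 -> nth false O j) -> h < n ->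
  Rc h.+1 O = Rc h (shift O).
Proof.
move=> sO full hn; apply/setP => -[[qx qy] qz]; rewrite !inE /= nth_shift //.
have hqx := ltn_ord qx; have hqy := ltn_ord qy; have hqz := ltn_ord qz.
case: (ltnP qz (n - h.+1)) => h1.
  have -> : (n - h <= qz) = false by apply/negbTE; rewrite -ltnNge; lia.
  by [].
case: (ltnP qz (n - h)) => h2.
  rewrite /=.
  have -> : qx + 3 * qy + 9 * (qz - (n - h.+1)) = qx + 3 * qy by lia.
  by rewrite full //; lia.
rewrite /=.
by have -> : qx + 3 * qy + 9 * (qz - (n - h.+1)) = qx + 3 * qy + 9 * (qz - (n - h)) + 9 by lia.
Qed.

Lemma fill_spec h k O : 0 < h <= n -> size O = 27 -> fits h O -> nfree O <= k ->
  cnt vb cv (Rc h O) = \sum_(O' <- fill k O | fits h O') cnt vb cv (Rc h O').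
Proof.
elim: k O => [|k IH] O hh sO fO hk; first by rewrite /= big_cons big_nil fO addn0.
rewrite fill_S; case: ifP => hi; last by rewrite big_cons big_nil fO addn0.
have h3 : ff O %/ 3 < 3 by lia.
have hz : n - h < n by lia.
rewrite (@step h O ((Ordinal (ltn_pmod (ff O) (isT : 0 < 3)), Ordinal h3), Ordinal hz)) //.
rewrite big_flatten big_map big_filter big_mkcondr /=.
rewrite big_seq_cond [RHS]big_seq_cond; apply: eq_bigr => d /andP[hd hok].
have [_ _ /andP[_ hd2] _] := six_prop hd.
case: ifP => hdh.
  apply: IH; [done | exact: size_place | by rewrite fits_place | ].
  by have := nfree_place sO hi hd; lia.
apply/esym/big1_seq => O' /andP[fO' hO'].
have [s' Hs] := fill_inv (size_place O (ff O) d) hO'.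
have := fits_sub (size_place _ _ _) s' Hs fO'.
by rewrite fits_place // hdh.
Qed.

Lemma cnt_G h O : h <= n -> size O = 27 -> fits h O -> cnt vb cv (Rc h O) = G h O.
Proof.
elim: h O => [|h IH] O hn sO fO.
  rewrite (fits0E sO fO) /G eqxx.
  have -> : Rc 0 E = set0 by apply/setP => q; rewrite !inE subn0 leqNgt ltn_ord.
  by apply: cnt0 => b hb; exists b.1; apply: cv_corner.
rewrite (@fill_spec _ 9) //; last by rewrite /nfree -(size_iota 0 9) count_size.
rewrite G_S sumnE big_map [RHS](bigID (fits h.+1)).
rewrite [X in _ = _ + X]big1_seq ?addn0; last first.
  move=> O' /andP[hf hO']; have [s' _] := fill_inv sO hO'.
  by apply: G_nofit; rewrite ?size_shift // fits_shift.
rewrite big_seq_cond [RHS]big_seq_cond; apply: eq_bigr => O' /andP[hO' hf].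
have [s' _] := fill_inv sO hO'.
have full := fill_full sO (_ : nfree O <= 9) hO'.
rewrite Rc_shift //.
  by apply: IH; rewrite ?size_shift ?fits_shift //; lia.
by apply: full; rewrite /nfree -(size_iota 0 9) count_size.
Qed.
End Box.

Lemma fitsE h : fits h E.
Proof. by apply/(fitsP _ (size_nseq _ _)) => j; rewrite nth_nseq if_same. Qed.

Lemma T_G N : T N = if 3 %| N then G (2 * N %/ 3) E else 0.
Proof.
rewrite /T; case: ifP => // h3.
set n := 2 * N %/ 3.
have hn : 9 * n = 6 * N by rewrite /n; move/dvdnP: h3 => [k ->]; lia.
rewrite /num_tilings.
transitivity (cnt (@vb n) (@cv n) [set: cell 3 3 n]).
  apply: eq_card => S; rewrite !inE.
  have -> : is_tiling 1 2 3 S = tiles (@vb n) (@cv n) [set: cell 3 3 n] S.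
    rewrite /is_tiling /tiles; congr (_ && _); apply: eq_forallb => p.
    by rewrite in_setT.
  case tS: (tiles _ _ _ S) => //=; apply/eqP.
  have := tiles_vol (@cells6 n) tS; rewrite cardsT !card_prod !card_ord.
  clearbody n; move: (#|S|) => c; lia.
have -> : [set: cell 3 3 n] = Rc n n E.
  by apply/setP => q; rewrite !inE subnn nth_nseq if_same.
by rewrite cnt_G ?size_nseq ?fitsE.
Qed.

Lemma vec_S h : vec h.+1 =
  map (fun O : seq bool => sumn (map (fun O' : seq bool => nth 0 (vec h) (index (shift O') st)) (fill 9 O))) st.
Proof. by []. Qed.

Lemma vec_G h O : O \in st -> nth 0 (vec h) (index O st) = G h O.
Proof.
elim: h O => [|h IH] O hO.
  by rewrite /vec (nth_map E) ?index_mem // nth_index.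
rewrite vec_S (nth_map E) ?index_mem // nth_index // G_S.
congr sumn; apply/eq_in_map => O' hO'; apply: IH.
by have := allP st_closed O hO => /allP; apply.
Qed.

Lemma size_st : size st = 18.
Proof. by []. Qed.

Lemma sum_lin (T : Type) (l : seq T) (f g k : T -> nat) :
  \sum_(x <- l) (7 * f x + 22 * g x + 36 * k x) =
  7 * \sum_(x <- l) f x + 22 * \sum_(x <- l) g x + 36 * \sum_(x <- l) k x.
Proof. elim: l => [|x l IH]; rewrite ?big_nil // !big_cons IH; lia. Qed.

Lemma Grec h O : O \in st -> G h.+4.+2 O = 7 * G h.+4 O + 22 * G h.+2 O + 36 * G h O.
Proof.
elim: h O => [|h IH] O hO.
  have := vec_rec; cbv zeta; move=> /allP /(_ (index O st)).
  rewrite mem_iota -size_st index_mem hO => /(_ isT) /eqP.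
  by rewrite !vec_G.
rewrite !G_S.
have cl : forall O', O' \in fill 9 O -> shift O' \in st.
  by move=> O'; have := allP st_closed O hO => /allP; apply.
rewrite !sumnE !big_map [LHS]big_seq [LHS](eq_bigr (fun O' => 7 * G h.+4 (shift O') + 22 * G h.+2 (shift O') + 36 * G h (shift O'))); last first.
  by move=> O' hO'; rewrite (IH _ (cl O' hO')).
by rewrite -big_seq sum_lin.
Qed.

Lemma G_small : [/\ G 0 E = 1, G 2 E = 6 & G 4 E = 64].
Proof.
have hE : E \in st by vm_compute.
rewrite -!(vec_G _ hE).
by split; vm_compute.
Qed.

Import GRing.Theory.
Local Open Scope ring_scope.

Lemma coef_den j : T_den`_j =
  (j == 0%N)%:R - 7%:R * (j == 3%N)%:R - 22%:R * (j == 6%N)%:R - 36%:R * (j == 9%N)%:R :> int.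
Proof. by rewrite /T_den !coefB !coefZ coef1 !coefXn. Qed.

Lemma coef_num j : T_num`_j = (j == 0%N)%:R - (j == 3%N)%:R :> int.
Proof. by rewrite /T_num coefB coef1 coefXn. Qed.

Lemma sel (f : nat -> int) N j :
  \sum_(i < N.+1) f i * ((N - i == j)%N%:R) = if (j <= N)%N then f (N - j)%N else 0.
Proof.
case: leqP => hj.
  have hi : (N - j < N.+1)%N by lia.
  rewrite (bigD1 (Ordinal hi)) //= big1 ?addr0.
    by rewrite (_ : (N - (N - j) == j)%N) ?mulr1 //; apply/eqP; lia.
  move=> i /eqP hne.
  have hf : (N - i == j)%N = false.
    apply/negP => /eqP E0; apply: hne; apply: val_inj => /=; have := ltn_ord i; lia.
  by rewrite hf mulr0.
rewrite big1 // => i _.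
have hf : (N - i == j)%N = false by apply/negP => /eqP; have := ltn_ord i; lia.
by rewrite hf mulr0.
Qed.

Lemma Tsmall m : (m < 9)%N -> (T m)%:Z = nth 0 [:: 1; 0; 0; 6; 0; 0; 64; 0; 0] m.
Proof.
have [G0 G2 G4] := G_small.
case: m => [|[|[|[|[|[|[|[|[|m]]]]]]]]] hm; last by exfalso; lia.
  - by rewrite T_G (_ : (2 * 0 %/ 3)%N = 0%N) // G0.
  - by rewrite T_G.
  - by rewrite T_G.
  - by rewrite T_G (_ : (2 * 3 %/ 3)%N = 2%N) // G2.
  - by rewrite T_G.
  - by rewrite T_G.
  - by rewrite T_G (_ : (2 * 6 %/ 3)%N = 4%N) // G4.
  - by rewrite T_G.
  - by rewrite T_G.
Qed.

Theorem mainTheorem19 :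
  forall N : nat,
    \sum_(i < N.+1) ((T i)%:Z * T_den`_(N - i)) = T_num`_N.
Proof.
move=> N.
transitivity (\sum_(i < N.+1) ((T i)%:Z * ((N - i == 0)%N%:R) - 7%:R * ((T i)%:Z * ((N - i == 3)%N%:R))
   - 22%:R * ((T i)%:Z * ((N - i == 6)%N%:R)) - 36%:R * ((T i)%:Z * ((N - i == 9)%N%:R)))).
  by apply: eq_bigr => i _; rewrite coef_den; ring.
rewrite !sumrB -!mulr_sumr !(sel (fun i => (T i)%:Z)) coef_num subn0 leq0n.
have [G0 G2 G4] := G_small.
have hE : E \in st by vm_compute.
case: (ltnP N 9) => hN.
  rewrite !Tsmall; try lia.
  by do 9 (case: N hN => [|N] hN; [ vm_compute; reflexivity | ]).
have h3N : (3 <= N)%N by lia.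
have h6N : (6 <= N)%N by lia.
rewrite h3N h6N.
have -> : (N == 0)%N = false by apply/negbTE; lia.
have -> : (N == 3)%N = false by apply/negbTE; lia.
rewrite !T_G.
case: (boolP (3 %| N)%N) => h3.
  move/dvdnP: h3 => [k Ek].
  have [m Em] : exists m, k = (m + 3)%N by exists (k - 3)%N; lia.
  have d0 : (3 %| N)%N by apply/dvdnP; exists (m + 3)%N; lia.
  have d3 : (3 %| N - 3)%N by apply/dvdnP; exists (m + 2)%N; lia.
  have d6 : (3 %| N - 6)%N by apply/dvdnP; exists (m + 1)%N; lia.
  have d9 : (3 %| N - 9)%N by apply/dvdnP; exists m; lia.
  rewrite [RHS]/= subr0 d3 d6 d9.
  have -> : (2 * N %/ 3)%N = (2 * m).+4.+2 by lia.
  have -> : (2 * (N - 3) %/ 3)%N = (2 * m).+4 by lia.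
  have -> : (2 * (N - 6) %/ 3)%N = (2 * m).+2 by lia.
  have -> : (2 * (N - 9) %/ 3)%N = (2 * m)%N by lia.
  rewrite (Grec _ hE); lia.
have nd : forall j, (j <= N)%N -> (3 %| j)%N -> (3 %| N - j)%N = false.
  move=> j hj /dvdnP [a Ea]; apply/negbTE; apply: contra h3 => /dvdnP [b Eb].
  by apply/dvdnP; exists (a + b)%N; lia.
have n3 := nd 3%N h3N isT; have n6 := nd 6%N h6N isT; have n9 := nd 9%N hN isT.
rewrite [RHS]/= n3 n6 n9.
by rewrite !mulr0 !subr0.
Qed.
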